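(* Let $K$ be a convex body in $\mathbb{R}^d$ with $o\in\mathrm{int}(K)$, let $\varepsilon\ge0$, and let $v_1+\lambda_1K$, $v_2+\lambda_2K$ be positive homothets of $K$ with $\lambda_1,\lambda_2\ge1$, $v_1\notin v_2+\lambda_2\,\mathrm{int}(K)$, $v_2\notin v_1+\lambda_1\,\mathrm{int}(K)$, and for $i=1,2$: $o\notin v_i+\lambda_i\,\mathrm{int}(K)$ and $(v_i+\lambda_iK)\cap(-\varepsilon K)\ne\emptyset$. Then \[\left\|\frac{-v_1}{\|-v_1\|_K}-\frac{-v_2}{\|-v_2\|_K}\right\|_{K\cap-K}\ge1-\varepsilon.\]
   Context: A convex body is a compact convex set with non-empty interior. For a convex body $L$ with $o\in\mathrm{int}(L)$, $\|x\|_L=\inf\{\mu>0:x\in\mu L\}$; in particular $\|x\|_{K\cap -K}=\max\{\|x\|_K,\|-x\|_K\}$. *)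

(* Defs.v *)
From HB Require Import structures.
From mathcomp Require Import all_boot all_order all_algebra.
From mathcomp Require Import all_classical all_reals all_analysis.
Set Implicit Arguments. Unset Strict Implicit. Unset Printing Implicit Defensive.
Import Order.TTheory GRing.Theory Num.Theory.
Import numFieldNormedType.Exports.
Local Open Scope classical_set_scope.
Local Open Scope ring_scope.

Definition convex_body (R : realType) (d : nat) (K : set 'rV[R]_d) : Prop :=
  compact K /\ convex_set (K : set (convex_lmodType 'rV[R]_d)) /\ (interior K) !=set0.

Definition homothet (R : realType) (d : nat) (v : 'rV[R]_d) (lam : R)
  (A : set 'rV[R]_d) : set 'rV[R]_d :=
  [set v + lam *: y | y in A].

Definition gauge (R : realType) (d : nat) (L : set 'rV[R]_d) (x : 'rV[R]_d) : R :=
  inf [set mu : R | 0 < mu /\ homothet 0 mu L x].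

(* Main.v *)
Require Import Defs.
From HB Require Import structures.
From mathcomp Require Import all_boot all_order all_algebra.
From mathcomp Require Import all_classical all_reals all_analysis.
From mathcomp Require Import lra ring.
Import Order.TTheory GRing.Theory Num.Theory.
Import numFieldNormedType.Exports.
Local Open Scope classical_set_scope.
Local Open Scope ring_scope.

Lemma conv2 (R : realType) (d : nat) (K : set 'rV[R]_d) (x y : 'rV[R]_d) (t : R) :
  convex_set (K : set (convex_lmodType 'rV[R]_d)) -> K x -> K y -> 0 <= t -> t <= 1 ->
  K (t *: x + (1 - t) *: y).
Proof.
move=> cK Kx Ky t0 t1.
have := cK x y (Itv01 t0 t1); rewrite !inE => /(_ Kx Ky).
by [].
Qed.

Lemma conv3 (R : realType) (d : nat) (K : set 'rV[R]_d) (a b z : 'rV[R]_d) (p q c : R) :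
  convex_set (K : set (convex_lmodType 'rV[R]_d)) -> K a -> K b -> K z ->
  0 <= p -> 0 <= q -> 0 <= c -> p + q + c = 1 ->
  K (p *: a + q *: b + c *: z).
Proof.
move=> cK Ka Kb Kz p0 q0 c0 e.
have [s0|spos] := eqVneq (p + q) 0.
  have p00 : p = 0 by lra.
  have q00 : q = 0 by lra.
  have c1 : c = 1 by lra.
  by rewrite p00 q00 c1 !scale0r !add0r scale1r.
have sp : 0 < p + q by rewrite lt_neqAle eq_sym spos addr_ge0.
have -> : p *: a + q *: b + c *: z =
   (p + q) *: ((p / (p + q)) *: a + (1 - p / (p + q)) *: b) + (1 - (p + q)) *: z.
  have -> : 1 - (p + q) = c by lra.
  have -> : 1 - p / (p + q) = q / (p + q).
    by field; rewrite gt_eqF.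
  rewrite scalerDr !scalerA; congr (_ *: _ + _ *: _ + _).
    by field; rewrite gt_eqF.
  by field; rewrite gt_eqF.
apply: conv2 => //; last by lra.
apply: conv2 => //.
  by rewrite divr_ge0 // ltW.
by rewrite ler_pdivrMr // mul1r lerDl.
exact: ltW.
Qed.

Lemma ball0 (R : realType) (d : nat) (K : set 'rV[R]_d) :
  interior K 0 -> exists2 r : R, 0 < r & forall e, `|e| < r -> K e.
Proof.
move=> /nbhs_ballP [r r0 H]; exists r => // e he; apply: H.
by rewrite -ball_normE /ball_ /= sub0r normrN.
Qed.

Lemma intP (R : realType) (d : nat) (K : set 'rV[R]_d) (z : 'rV[R]_d) (c : R) :
  0 < c -> (forall e, `|e| < c -> K (z + e)) -> interior K z.
Proof.
move=> c0 H; apply/nbhs_ballP; exists c => // w.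
rewrite -ball_normE /ball_ /= => hw.
have e1 : z + (w - z) = w by rewrite addrC subrK.
rewrite -e1; apply: H; by rewrite distrC.
Qed.

Lemma int_sub (R : realType) (d : nat) (K : set 'rV[R]_d) z : interior K z -> K z.
Proof. exact: nbhs_singleton. Qed.

Lemma inner (R : realType) (d : nat) (K : set 'rV[R]_d) (y k : 'rV[R]_d) (p q : R) :
  convex_set (K : set (convex_lmodType 'rV[R]_d)) -> interior K 0 ->
  0 <= p -> 0 <= q -> p + q < 1 -> K y -> K k -> interior K (p *: y + q *: k).
Proof.
move=> cK /ball0 [r r0 Hr] p0 q0 pq Ky Kk.
have c0 : 0 < 1 - p - q by lra.
apply: (@intP _ _ _ _ ((1 - p - q) * r)); first exact: mulr_gt0.
move=> e he.
have -> : p *: y + q *: k + e = p *: y + q *: k + (1 - p - q) *: ((1 - p - q)^-1 *: e).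
  by rewrite scalerA divff ?gt_eqF // scale1r.
apply: conv3 => //; [|exact: ltW|lra].
apply: Hr; rewrite normrZ ger0_norm ?invr_ge0 ?ltW //.
by rewrite mulrC -ltr_pdivlMr ?invr_gt0 // invrK mulrC.
Qed.

Lemma homP (R : realType) (d : nat) (L : set 'rV[R]_d) mu x :
  homothet 0 mu L x <-> exists2 y, L y & x = mu *: y.
Proof.
split; first by case=> y Ly <-; exists y => //; rewrite add0r.
by case=> y Ly ->; exists y => //; rewrite add0r.
Qed.

Lemma gset_ne (R : realType) (d : nat) (L : set 'rV[R]_d) (r : R) x :
  0 < r -> (forall e, `|e| < r -> L e) ->
  [set mu : R | 0 < mu /\ homothet 0 mu L x] !=set0.
Proof.
move=> r0 Hr; set mu := (`|x| + 1) / r.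
have mu0 : 0 < mu by rewrite divr_gt0 // ltr_wpDl.
exists mu; split => //; apply/homP; exists (mu^-1 *: x).
  apply: Hr; rewrite normrZ ger0_norm ?invr_ge0 ?ltW // /mu invf_div.
  by rewrite mulrAC ltr_pdivrMr ?ltr_wpDl // ltr_pM2l // ltrDl.
by rewrite scalerA divff ?gt_eqF // scale1r.
Qed.

Lemma gauge_le (R : realType) (d : nat) (L : set 'rV[R]_d) x mu :
  0 < mu -> homothet 0 mu L x -> gauge L x <= mu.
Proof.
move=> mu0 h; apply: ge_inf => //.
by exists 0 => z [] /ltW.
Qed.

Lemma gauge_ge (R : realType) (d : nat) (L : set 'rV[R]_d) (r : R) x c :
  0 < r -> (forall e, `|e| < r -> L e) ->
  (forall mu, 0 < mu -> homothet 0 mu L x -> c <= mu) -> c <= gauge L x.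
Proof.
move=> r0 Hr H; apply: lb_le_inf; first exact: gset_ne Hr.
by move=> mu [mu0 h]; apply: H.
Qed.

Lemma gauge_lt (R : realType) (d : nat) (L : set 'rV[R]_d) (r : R) x t :
  0 < r -> (forall e, `|e| < r -> L e) -> gauge L x < t ->
  exists mu, [/\ 0 < mu, mu < t & homothet 0 mu L x].
Proof.
move=> r0 Hr h; have [mu [mu0 hm] mut] := inf_lt (@gset_ne _ _ _ _ x r0 Hr) h.
by exists mu.
Qed.

Lemma half (R : realType) (d : nat) (K : set 'rV[R]_d) (eps : R) (w1 w2 y : 'rV[R]_d)
   (lam1 mu r : R) :
  convex_set (K : set (convex_lmodType 'rV[R]_d)) -> interior K 0 ->
  0 < r -> (forall e, `|e| < r -> K e) -> 0 <= eps -> 0 < lam1 ->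
  1 <= gauge K w2 -> gauge K w2 <= gauge K w1 -> gauge K w1 <= lam1 + eps ->
  (forall z, interior K z -> w1 - w2 <> lam1 *: z) ->
  0 < mu -> K y -> (gauge K w1)^-1 *: w1 - (gauge K w2)^-1 *: w2 = mu *: y ->
  1 - eps <= mu.
Proof.
move=> cK K0 r0 Hr eps0 lam0; set n1 := gauge K w1; set n2 := gauge K w2.
move=> n21 n12 n1l Hno mu0 Ky hy.
rewrite leNgt; apply/negP => hmu.
have n20 : 0 < n2 by lra.
have n10 : 0 < n1 by lra.
have h1 : n2 * mu < n2 * (1 - eps) by rewrite ltr_pM2l.
have h2 : n2 * (1 - eps) <= n2 - eps by nra.
set g := lam1 - (n2 * mu + n1 - n2).
have g0 : 0 < g by rewrite /g; lra.
set rho := g / (n1 - n2 + 1).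
have rho0 : 0 < rho by rewrite /rho divr_gt0 //; lra.
have rhoe : rho * (n1 - n2 + 1) = g by rewrite /rho mulrVK // unitfE; lra.
have nt : n1 < n1 * (1 + rho) by rewrite ltr_pMr // ltrDl.
have [m [m0 mt /homP [k Kk wk]]] := @gauge_lt _ _ K r w1 _ r0 Hr nt.
set a := n2 * mu; set b := (n1 - n2) * m / n1.
have a0 : 0 <= a by rewrite /a; apply: mulr_ge0; lra.
have b0 : 0 <= b by rewrite /b; apply: divr_ge0; [apply: mulr_ge0|]; lra.
have mb : m / n1 <= 1 + rho by rewrite ler_pdivrMr // mulrC ltW.
have hb : b <= (n1 - n2) * (1 + rho).
  rewrite /b -mulrA; apply: ler_wpM2l => //.
lra.
have e : (n1 - n2) * rho = g - rho by rewrite -rhoe; ring.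
rewrite mulrDr mulr1 e in hb.
have hab : a + b < lam1 by rewrite /g /a in hb *; lra.
have := Hno ((a / lam1) *: y + (b / lam1) *: k); apply.
  apply: inner => //; try (apply: divr_ge0; lra).
  by rewrite -mulrDl ltr_pdivrMr // mul1r.
have l0 : lam1 != 0 by rewrite gt_eqF.
rewrite scalerDr !scalerA.
have -> : lam1 * (a / lam1) = a by field.
have -> : lam1 * (b / lam1) = b by field.
have -> : a *: y = n2 *: (mu *: y) by rewrite scalerA.
have -> : b *: k = ((n1 - n2) / n1) *: (m *: k).
  by rewrite scalerA; congr (_ *: _); rewrite /b mulrAC.
rewrite -hy -wk scalerBr !scalerA divff ?gt_eqF // scale1r.
rewrite addrAC -scalerDl.
have -> : n2 * n1^-1 + (n1 - n2) / n1 = 1 by field; rewrite gt_eqF.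
by rewrite scale1r.
Qed.

Lemma one_side (R : realType) (d : nat) (K : set 'rV[R]_d) (eps : R) (v : 'rV[R]_d)
   (lam r : R) :
  convex_set (K : set (convex_lmodType 'rV[R]_d)) -> interior K 0 ->
  0 < r -> (forall e, `|e| < r -> K e) -> 0 <= eps -> 1 <= lam ->
  ~ homothet v lam (interior K) 0 ->
  homothet v lam K `&` homothet 0 (- eps) K !=set0 ->
  lam <= gauge K (- v) /\ gauge K (- v) <= lam + eps.
Proof.
move=> cK K0 r0 Hr eps0 lam1 Hn [z [[k Kk hk] [k' Kk' hk']]].
have l0 : 0 < lam by lra.
split.
  apply: (@gauge_ge _ _ K r (- v) lam r0 Hr) => mu mu0 /homP [y Ky hy].
  rewrite leNgt; apply/negP => hml; apply: Hn.
  exists ((mu / lam) *: y + 0 *: y).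
    apply: inner => //; [by apply: divr_ge0; lra| by rewrite addr0 ltr_pdivrMr // mul1r].
  rewrite scale0r addr0 scalerA mulrC mulfVK ?gt_eqF // -hy.
  by rewrite subrr.
apply: gauge_le; first lra.
apply/homP; exists ((lam / (lam + eps)) *: k + (1 - lam / (lam + eps)) *: k').
  apply: conv2 => //; first by apply: divr_ge0; lra.
  by rewrite ler_pdivrMr ?mul1r; lra.
have le0 : lam + eps != 0 by rewrite gt_eqF //; lra.
have -> : 1 - lam / (lam + eps) = eps / (lam + eps) by field.
rewrite scalerDr !scalerA !mulrA !(mulrC (lam + eps)) !mulfK //.
have -> : v = - (eps *: k') - lam *: k by rewrite -(addrK (lam *: k) v) hk -hk' add0r scaleNr.
by rewrite opprB opprK.
Qed.

Theorem lemma21 (R : realType) (d : nat) (K : set 'rV[R]_d) (eps : R)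
    (v1 v2 : 'rV[R]_d) (lam1 lam2 : R) :
  convex_body K -> interior K 0 -> 0 <= eps ->
  1 <= lam1 -> 1 <= lam2 ->
  ~ homothet v2 lam2 (interior K) v1 ->
  ~ homothet v1 lam1 (interior K) v2 ->
  ~ homothet v1 lam1 (interior K) 0 ->
  ~ homothet v2 lam2 (interior K) 0 ->
  homothet v1 lam1 K `&` homothet 0 (- eps) K !=set0 ->
  homothet v2 lam2 K `&` homothet 0 (- eps) K !=set0 ->
  gauge (K `&` homothet 0 (-1) K)
    ((gauge K (- v1))^-1 *: (- v1) - (gauge K (- v2))^-1 *: (- v2)) >= 1 - eps.
Proof.
move=> [_ [cK _]] K0 eps0 l1 l2 H21 H12 H10 H20 I1 I2.
have [r r0 Hr] := ball0 _ _ _ K0.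
have rK : forall e, `|e| < r -> (K `&` homothet 0 (-1) K) e.
  move=> e he; split; first exact: Hr.
  exists (- e); first by apply: Hr; rewrite normrN.
  by rewrite add0r scaleN1r opprK.
have [a1 b1] := one_side _ _ _ _ _ _ _ cK K0 r0 Hr eps0 l1 H10 I1.
have [a2 b2] := one_side _ _ _ _ _ _ _ cK K0 r0 Hr eps0 l2 H20 I2.
apply: (gauge_ge _ _ _ _ _ _ r0 rK) => mu mu0 /homP [y [Ky [y' Ky' hy']] hx].
have N12 : forall z, interior K z -> - v1 - - v2 <> lam1 *: z.
  move=> z zi he; apply: H12; exists z => //.
  by rewrite -he opprK addrA subrr add0r.
have N21 : forall z, interior K z -> - v2 - - v1 <> lam2 *: z.
  move=> z zi he; apply: H21; exists z => //.
  by rewrite -he opprK addrA subrr add0r.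
have [h|h] := lerP (gauge K (- v2)) (gauge K (- v1)).
  apply: (half _ _ _ _ _ _ _ _ _ _ cK K0 r0 Hr eps0 _ _ h b1 N12 mu0 Ky hx); lra.
apply: (half _ _ _ _ _ _ _ _ _ _ cK K0 r0 Hr eps0 _ _ (ltW h) b2 N21 mu0 Ky'); first lra; first lra.
have -> : y' = - y by rewrite -hy' add0r scaleN1r opprK.
by rewrite (scalerN mu y) -hx opprB.
Qed.
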